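(* Let $R$ be a unital ring, let $S\subseteq R$ be a subring with $1\in S$, and let $m,n\in\mathbb{N}$. (1) If $1\in\Sigma^m\big(S\cdot\big[[S,S]_1,[S,S]_1\big]_1\big)$, then $R=\Sigma^m\big([R,R]_1+[R,R]_1\cdot[R,R]_1\big)$. In particular, if there exist $a\in S$ and $u,v\in[S,S]_1$ with $1=a[u,v]$, then $R=[R,R]_1+[R,R]_1\cdot[R,R]_1$. (2) If $1\in\Sigma^n\big(S\cdot\big[[S,S]_1,[S,S]_1^{\cdot 2}\big]_1\big)$, then $\xi(R)\leq 3n$. In particular, if there exist $a\in S$ and $u,v,w\in[S,S]_1$ with $1=a[u,vw]$, then $\xi(R)\leq 3$.
   Context: $[x,y]=xy-yx$. For subsets $X,Y$ of a ring: $[X,Y]_1=\{[x,y]:x\in X,y\in Y\}$; $X\cdot Y=\{xy:x\in X,y\in Y\}$, $X^{\cdot 2}=X\cdot X$; $X+Y=\{x+y\}$; $\Sigma^k X=\{x_1+\dots+x_k:x_i\in X\}$. For a unital ring $T$ generated by its commutators, $\xi(T)$ is the minimal $N$ such that $T=\Sigma^N\big([T,T]_1\cdot[T,T]_1\big)$, i.e. every element is a sum of $N$ elements $[b,c][d,e]$. *)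

(* Defs.v *)
From mathcomp Require Import all_boot all_order all_algebra.
Set Implicit Arguments. Unset Strict Implicit. Unset Printing Implicit Defensive.
Import GRing.Theory.
Local Open Scope ring_scope.

Definition comm (R : pzRingType) (x y : R) : R := x * y - y * x.

Definition comm1 (R : pzRingType) (X Y : R -> Prop) : R -> Prop :=
  fun z => exists x y, [/\ X x, Y y & z = comm x y].

Definition mulset (R : pzRingType) (X Y : R -> Prop) : R -> Prop :=
  fun z => exists x y, [/\ X x, Y y & z = x * y].

Definition sqset (R : pzRingType) (X : R -> Prop) : R -> Prop := mulset X X.

Definition addset (R : pzRingType) (X Y : R -> Prop) : R -> Prop :=
  fun z => exists x y, [/\ X x, Y y & z = x + y].

Definition sigma (R : pzRingType) (k : nat) (X : R -> Prop) : R -> Prop :=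
  fun z => exists f : 'I_k -> R, (forall i, X (f i)) /\ z = \sum_(i < k) f i.

Definition full (R : pzRingType) : R -> Prop := fun _ => True.

Definition commR (R : pzRingType) : R -> Prop := comm1 (@full R) (@full R).

(* xi(T) <= N : T is generated by commutators and the minimal N0 with
   T = Sigma^N0([T,T]_1 . [T,T]_1) exists and is at most N. *)
Definition xi_le (R : pzRingType) (N : nat) : Prop :=
  exists N0, (N0 <= N)%N /\ forall x : R, sigma N0 (mulset (@commR R) (@commR R)) x.

(* Main.v *)
Require Import Defs.
From mathcomp Require Import all_boot all_order all_algebra.
Import GRing.Theory.
Local Open Scope ring_scope.

Section H.
Variable R : pzRingType.
Implicit Types (P Q : R -> Prop).

Lemma sigma0 Q : sigma 0 Q 0.
Proof. exists (fun _ => 0); split; [by case|by rewrite big_ord0]. Qed.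

Lemma sigma1 Q z : Q z -> sigma 1 Q z.
Proof. move=> Hz; exists (fun _ => z); split=> //; by rewrite big_ord1. Qed.

Lemma sigma_add Q a b x y : sigma a Q x -> sigma b Q y -> sigma (a + b) Q (x + y).
Proof.
move=> [f [Hf ->]] [g [Hg ->]].
exists (fun i => match split i with inl j => f j | inr j => g j end); split.
  by move=> i; case: (split i).
rewrite big_split_ord; congr (_ + _); apply: eq_bigr => i _.
  by rewrite (unsplitK (inl i)).
by rewrite (unsplitK (inr i)).
Qed.

Lemma sigma_mul P Q k :
  (forall x p, P p -> sigma k Q (x * p)) ->
  forall m z, sigma m P z -> forall x, sigma (k * m) Q (x * z).
Proof.
move=> H; elim=> [|m IH] z [f [Hf ->]] x.
  by rewrite big_ord0 mulr0 muln0; apply: sigma0.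
rewrite big_ord_recl mulrDr mulnS; apply: sigma_add; first exact: H.
apply: IH; exists (fun i => f (lift ord0 i)); split=> //.
Qed.

Lemma id1 (y u v : R) : y * comm u v = comm (y * u) v + comm v y * u.
Proof. by rewrite /comm !mulrBr !mulrBl !mulrA addrA subrK. Qed.

Lemma id2 (z v w : R) : comm z (v * w) = comm z v * w + v * comm z w.
Proof. by rewrite /comm !mulrBr !mulrBl !mulrA addrA subrK. Qed.

Lemma commR_comm (x y : R) : commR x -> True.
Proof. by []. Qed.

Lemma cR (x y : R) : @commR R (comm x y).
Proof. by exists x, y. Qed.

End H.

Theorem lemma5p13 (R : pzRingType) (S : {pred R}) (HS : GRing.subring_closed S) :
  let Sp : R -> Prop := fun x => x \in S in
  let CS := comm1 Sp Sp in
  (* (1) *)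
  (forall m : nat,
     sigma m (mulset Sp (comm1 CS CS)) 1 ->
     forall x : R, sigma m (addset (@commR R) (mulset (@commR R) (@commR R))) x)
  /\
  ((exists a u v, [/\ Sp a, CS u, CS v & 1 = a * comm u v]) ->
     forall x : R, addset (@commR R) (mulset (@commR R) (@commR R)) x)
  /\
  (* (2) *)
  (forall n : nat,
     sigma n (mulset Sp (comm1 CS (sqset CS))) 1 -> xi_le R (3 * n))
  /\
  ((exists a u v w, [/\ Sp a, CS u, CS v, CS w & 1 = a * comm u (v * w)]) ->
     xi_le R 3).
Proof.
move=> Sp CS.
have key1 : forall (x a u v : R), CS u ->
    addset (@commR R) (mulset (@commR R) (@commR R)) (x * (a * comm u v)).
  move=> x a u v [s [t [_ _ ->]]].
  exists (comm (x * a * comm s t) v), (comm v (x * a) * comm s t); split.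
  - exact: cR.
  - by exists (comm v (x * a)), (comm s t); split=> //; apply: cR.
  - by rewrite mulrA id1.
have key2 : forall (x a u v w : R), CS u -> CS v -> CS w ->
    sigma 3 (mulset (@commR R) (@commR R)) (x * (a * comm u (v * w))).
  move=> x a u v w [s [t [_ _ ->]]] [s1 [t1 [_ _ ->]]] [s2 [t2 [_ _ ->]]].
  rewrite mulrA id1 id2.
  apply: (@sigma_add _ _ 2 1); last first.
    by apply: sigma1; exists (comm (comm s1 t1 * comm s2 t2) (x * a)), (comm s t); split=> //; apply: cR.
  apply: (@sigma_add _ _ 1 1); apply: sigma1.
    by exists (comm (x * a * comm s t) (comm s1 t1)), (comm s2 t2); split=> //; apply: cR.
  by exists (comm s1 t1), (comm (x * a * comm s t) (comm s2 t2)); split=> //; apply: cR.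
split.
  move=> m Hm x; rewrite -(mulr1 x) -(mul1n m).
  apply: (@sigma_mul R _ _ 1%N _ m _ Hm x) => y p [a [q [_ [u [v [Hu _ ->]]] ->]]].
  by apply: sigma1; apply: key1.
split.
  by move=> [a [u [v [_ Hu _ E]]]] x; rewrite -(mulr1 x) E; apply: key1.
split.
  move=> n Hn; exists (3 * n)%N; split=> // x; rewrite -(mulr1 x).
  apply: (@sigma_mul R _ _ 3%N _ n _ Hn x) => y p [a [q [_ [u [vw [Hu [v [w [Hv Hw ->]]] ->]]] ->]]].
  exact: key2.
move=> [a [u [v [w [_ Hu Hv Hw E]]]]]; exists 3%N; split=> // x.
by rewrite -(mulr1 x) E; apply: key2.
Qed.
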